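(* The time evolution commutes with unbasketing: for every state $S=(S_i)_{i\in\mathbb Z}$ of the box-basket-ball system, choosing an index $i_0$ such that $S_i=V$ and $(T_\infty S)_i=V$ for all $i\le i_0$ and anchoring both unbasketings so that site $i_0$ is sent to cell $0$, one has $\mathrm{Unb}(T_\infty(S))=T_{BBS}(\mathrm{Unb}(S))$.
   Context: Box-basket-ball system (BBBS). A site state is a triple $(a,b,c)$ of nonnegative integers with $a=b-c+1$ (one box, $b$ baskets, $c$ balls; each box/basket holds at most one ball, balls placed in the box first). $V=(1,0,0)$. A state is a sequence $(S_i)_{i\in\mathbb Z}$ of site states with $S_i=V$ for all but finitely many $i$. The time evolution $T_\infty$: first every empty basket (there are $\min(a_i,b_i)$ at site $i$) is moved from site $i$ to site $i+1$, full baskets staying; then the balls are taken one at a time from left to right, and each is moved to the nearest currently unoccupied box or basket at a site strictly to its right (each ball moves exactly once). Box-ball system (BBS): a state is a $\{0,1\}$-valued sequence indexed by $\mathbb Z$ (cells; $1$ = ball) with finitely many $1$'s; its time evolution $T_{BBS}$ takes the balls one at a time from left to right and moves each to the nearest currently empty cell to its right. Unbasketing $\mathrm{Unb}$: each site $(a,b,c)$ is replaced by $b+1$ consecutive cells of the box-ball system, the first $c$ of which contain a ball; doing this for all sites in order gives a box-ball state (determined once one fixes which cell a given site starts at). *)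

(* Defs.v *)
From Stdlib Require Import ZArith List ClassicalEpsilon.
Open Scope Z_scope.

(** A site state (a,b,c): a = #boxes-slot availability, b baskets, c balls.
    The constraint a = b - c + 1 with a,b,c >= 0 is  a + c = b + 1  in nat. *)
Record site := mkSite { sa : nat; sb : nat; sc : nat }.

Definition valid_site (s : site) : Prop := (sa s + sc s = sb s + 1)%nat.

Definition V : site := mkSite 1 0 0.

Definition is_state (S : Z -> site) : Prop :=
  (forall i, valid_site (S i)) /\ exists N : Z, forall i, N < Z.abs i -> S i = V.

Definition upd {A} (f : Z -> A) (k : Z) (v : A) : Z -> A :=
  fun x => if Z.eqb x k then v else f x.

Fixpoint find_from (p : Z -> bool) (lo : Z) (fuel : nat) : option Z :=
  match fuel with
  | O => None
  | S f => if p lo then Some lo else find_from p (lo + 1) f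
  end.

Definition sites (L R : Z) : list Z :=
  map (fun n => L + Z.of_nat n) (seq 0 (Z.to_nat (R - L + 1))).

Definition empty_baskets (s : site) : nat := Nat.min (sa s) (sb s).

Definition baskets_after (S : Z -> site) (k : Z) : nat :=
  (sb (S k) - empty_baskets (S k) + empty_baskets (S (k - 1)%Z))%nat.

(** capacity (box + baskets) at site k after the basket move *)
Definition cap_after (S : Z -> site) (k : Z) : nat := Datatypes.S (baskets_after S k).

(** The search bound [fuel] is
    chosen (below) large enough that a free slot is always found. *)
Definition move_ball_inf (S : Z -> site) (fuel : nat) (count : Z -> nat) (j : Z)
  : Z -> nat :=
  let count1 := upd count j (pred (count j)) in
  match find_from (fun k => Nat.ltb (count1 k) (cap_after S k)) (j + 1) fuel with
  | Some k => upd count1 k (Datatypes.S (count1 k))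
  | None => count1
  end.

Definition Tinf_w (L R : Z) (S : Z -> site) : Z -> site :=
  let nb := fold_right (fun j acc => (sc (S j) + acc)%nat) O (sites L R) in
  let fuel := (Z.to_nat (R - L) + 2 + nb)%nat in
  let count0 := fun k => sc (S k) in
  let count := fold_left
       (fun cnt j => Nat.iter (sc (S j)) (fun c => move_ball_inf S fuel c j) cnt)
       (sites L R) count0 in
  fun k => mkSite (baskets_after S k + 1 - count k) (baskets_after S k) (count k).

Definition bbbs_window (S : Z -> site) : Z * Z :=
  epsilon (inhabits (0, 0))
    (fun w => forall i, i < fst w \/ snd w < i -> S i = V).

Definition Tinf (S : Z -> site) : Z -> site :=
  Tinf_w (fst (bbbs_window S)) (snd (bbbs_window S)) S.

Definition is_bbs (B : Z -> bool) : Prop :=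
  exists L R : Z, forall x, B x = true -> L <= x <= R.

Definition TBBS_w (L R : Z) (B : Z -> bool) : Z -> bool :=
  let nb := length (filter B (sites L R)) in
  let fuel := (Z.to_nat (R - L) + 2 + nb)%nat in
  fold_left
    (fun cfg x =>
       if B x then
         let cfg1 := upd cfg x false in
         match find_from (fun y => negb (cfg1 y)) (x + 1) fuel with
         | Some y => upd cfg1 y true
         | None => cfg1
         end
       else cfg)
    (sites L R) B.

Definition bbs_window (B : Z -> bool) : Z * Z :=
  epsilon (inhabits (0, 0))
    (fun w => forall x, B x = true -> fst w <= x <= snd w).

Definition TBBS (B : Z -> bool) : Z -> bool :=
  TBBS_w (fst (bbs_window B)) (snd (bbs_window B)) B.

(** cell number n (counting from 0) among the cells of sites i, i+1, ... *)
Fixpoint unb_r (fuel : nat) (S : Z -> site) (i : Z) (n : nat) : bool :=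
  match fuel with
  | O => false
  | Datatypes.S f =>
      if Nat.ltb n (sb (S i) + 1) then Nat.ltb n (sc (S i))
      else unb_r f S (i + 1) (n - (sb (S i) + 1))
  end.

(** cell number n counting leftwards from the last cell of site i, among the
    cells of sites i, i-1, ... *)
Fixpoint unb_l (fuel : nat) (S : Z -> site) (i : Z) (n : nat) : bool :=
  match fuel with
  | O => false
  | Datatypes.S f =>
      if Nat.ltb n (sb (S i) + 1) then Nat.ltb (sb (S i) - n) (sc (S i))
      else unb_l f S (i - 1) (n - (sb (S i) + 1))
  end.

(** Unb anchored so that the first cell of site i0 is cell 0: site (a,b,c)
    becomes b+1 consecutive cells, the first c of which hold a ball. *)
Definition Unb (i0 : Z) (S : Z -> site) : Z -> bool :=
  fun x =>
    if Z.leb 0 x then unb_r (Datatypes.S (Z.to_nat x)) S i0 (Z.to_nat x)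
    else unb_l (Datatypes.S (Z.to_nat (- x - 1))) S (i0 - 1) (Z.to_nat (- x - 1)).

(* Main.v *)
Require Import Defs.
From Stdlib Require Import ZArith Lia List FunctionalExtensionality ClassicalEpsilon.
Open Scope Z_scope.

Lemma find_from_spec (p : Z -> bool) (lo : Z) (fuel d : nat) :
  (d < fuel)%nat ->
  (forall d', (d' < d)%nat -> p (lo + Z.of_nat d') = false) ->
  p (lo + Z.of_nat d) = true ->
  find_from p lo fuel = Some (lo + Z.of_nat d).
Proof.
  revert lo d. induction fuel as [|f IH]; intros lo d Hd Hpre Hp; [lia|].
  simpl. destruct d as [|d].
  - replace (lo + Z.of_nat 0) with lo in * by lia. now rewrite Hp.
  - pose proof (Hpre 0%nat ltac:(lia)) as H0.
    replace (lo + Z.of_nat 0) with lo in H0 by lia. rewrite H0.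
    replace (lo + Z.of_nat (Datatypes.S d)) with (lo + 1 + Z.of_nat d) by lia.
    apply IH; [lia| |].
    + intros d' Hd'. replace (lo + 1 + Z.of_nat d') with (lo + Z.of_nat (Datatypes.S d')) by lia.
      apply Hpre; lia.
    + now replace (lo + 1 + Z.of_nat d) with (lo + Z.of_nat (Datatypes.S d)) by lia.
Qed.

Lemma find_from_some (p : Z -> bool) lo fuel k :
  find_from p lo fuel = Some k -> p k = true.
Proof.
  revert lo. induction fuel; simpl; intros lo H; [discriminate|].
  destruct (p lo) eqn:E; [now inversion H; subst|eauto].
Qed.

Section Gen.
Variables (c cap : Z -> nat).
Definition free (j : Z) : nat := (cap j - c j)%nat.

Definition gmove (fuel : nat) (count : Z -> nat) (j : Z) : Z -> nat :=
  let count1 := upd count j (pred (count j)) in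
  match find_from (fun k => Nat.ltb (count1 k) (cap k)) (j + 1) fuel with
  | Some k => upd count1 k (Datatypes.S (count1 k))
  | None => count1
  end.

Definition gfold (fuel : nat) (L R : Z) : Z -> nat :=
  fold_left (fun cnt j => Nat.iter (c j) (fun x => gmove fuel x j) cnt) (sites L R) c.

Fixpoint G (s : Z) (m : nat) (n : nat) : nat :=
  match n with
  | O => Nat.min (free s) m
  | Datatypes.S n' => G (s + 1) (m - Nat.min (free s) m) n'
  end.

Fixpoint Mr (L : Z) (M0 : nat) (n : nat) : nat :=
  match n with
  | O => M0
  | Datatypes.S n' => let M := Mr L M0 n' in
      (M - Nat.min (free (L + Z.of_nat n')) M + c (L + Z.of_nat n'))%nat
  end.

Definition fin (L j : Z) : nat := Nat.min (free j) (Mr L 0 (Z.to_nat (j - L))).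

Fixpoint csum (L : Z) (n : nat) : nat :=
  match n with O => O | Datatypes.S n' => (c L + csum (L + 1) n')%nat end.

Lemma csum_S L n : csum L (Datatypes.S n) = (csum L n + c (L + Z.of_nat n))%nat.
Proof.
  revert L; induction n; intros L; simpl.
  - replace (L + 0) with L by lia. lia.
  - simpl in IHn. rewrite IHn. replace (L + 1 + Z.of_nat n) with (L + Z.pos (Pos.of_succ_nat n)) by lia. lia.
Qed.

Lemma csum_mono L n m : (n <= m)%nat -> (csum L n <= csum L m)%nat.
Proof. induction 1; [lia|]. rewrite csum_S; lia. Qed.

Lemma Mr_le L n : (Mr L 0 n <= csum L n)%nat.
Proof. induction n; [simpl; lia|]. rewrite csum_S. simpl. lia. Qed.

Lemma Mr_shift L M0 n m : Mr L M0 (n + m) = Mr (L + Z.of_nat n) (Mr L M0 n) m.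
Proof.
  induction m; simpl.
  - now rewrite Nat.add_0_r.
  - rewrite Nat.add_succ_r. simpl. rewrite IHm.
    now replace (L + Z.of_nat (n + m)) with (L + Z.of_nat n + Z.of_nat m) by lia.
Qed.

Lemma Mr_zero L n : (forall i, (i < n)%nat -> c (L + Z.of_nat i) = 0%nat) -> Mr L 0 n = 0%nat.
Proof.
  induction n; intros H; simpl; [lia|]. rewrite IHn by (intros; apply H; lia).
  rewrite H by lia. lia.
Qed.

Lemma G_0 s n : G s 0 n = 0%nat.
Proof. revert s; induction n; intros s; simpl; [lia|]. replace (Nat.min (free s) 0) with 0%nat by lia. apply IHn. Qed.

Lemma G_c0 s M n : (forall j, s <= j -> c j = 0%nat) ->
  G s M n = Nat.min (free (s + Z.of_nat n)) (Mr s M n).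
Proof.
  revert s M; induction n; intros s M H.
  - simpl. now replace (s + 0) with s by lia.
  - change (G s M (Datatypes.S n)) with (G (s + 1) (M - Nat.min (free s) M) n).
    rewrite IHn by (intros; apply H; lia).
    replace (Mr s M (Datatypes.S n)) with (Mr (s + Z.of_nat 1) (Mr s M 1) n)
      by (rewrite <- Mr_shift; reflexivity).
    replace (s + 1 + Z.of_nat n) with (s + Z.of_nat (Datatypes.S n)) by lia.
    cbn [Mr]. replace (s + Z.of_nat 0) with s by lia. rewrite (H s) by lia. rewrite Nat.add_0_r.
    replace (s + Z.of_nat 1) with (s + 1) by lia. reflexivity.
Qed.

Hypothesis Hcap : forall j, (c j <= cap j)%nat.

Lemma G_succ (Bnd : Z) (HB : forall j, Bnd <= j -> (1 <= free j)%nat) :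
  forall N s m, (Z.to_nat (Bnd - s) + m <= N)%nat ->
  exists d, (d <= Z.to_nat (Bnd - s) + m)%nat /\
    (forall d', (d' < d)%nat -> G s m d' = free (s + Z.of_nat d')) /\
    (G s m d < free (s + Z.of_nat d))%nat /\
    G s (Datatypes.S m) d = Datatypes.S (G s m d) /\
    (forall d', d' <> d -> G s (Datatypes.S m) d' = G s m d').
Proof.
  induction N as [N IH] using lt_wf_ind. intros s m Hm.
  destruct (Nat.lt_ge_cases m (free s)) as [Hlt|Hge].
  - exists 0%nat. split; [lia|]. split; [intros; lia|].
    cbn [G]. replace (s + Z.of_nat 0) with s by lia. split; [lia|]. split; [lia|].
    intros [|d'] Hd'; [lia|]. cbn [G].
    replace (Datatypes.S m - Nat.min (free s) (Datatypes.S m))%nat with 0%nat by lia.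
    replace (m - Nat.min (free s) m)%nat with 0%nat by lia. reflexivity.
  - assert (Hmeas : (Z.to_nat (Bnd - (s + 1)) + (m - free s) < N)%nat).
    { destruct (Z_lt_le_dec s Bnd).
      - assert (Z.to_nat (Bnd - (s+1)) < Z.to_nat (Bnd - s))%nat by lia. lia.
      - specialize (HB s ltac:(lia)). lia. }
    destruct (IH _ Hmeas (s + 1) (m - free s)%nat ltac:(lia)) as (d & Hd & Hpre & Hlt & Hsucc & Hother).
    exists (Datatypes.S d).
    assert (E1 : (m - Nat.min (free s) m)%nat = (m - free s)%nat) by lia.
    assert (E2 : (Datatypes.S m - Nat.min (free s) (Datatypes.S m))%nat = Datatypes.S (m - free s)) by lia.
    split.
    { destruct (Z_lt_le_dec s Bnd).
      - assert (Z.to_nat (Bnd - (s+1)) < Z.to_nat (Bnd - s))%nat by lia. lia.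
      - specialize (HB s ltac:(lia)). lia. }
    split.
    + intros [|d'] Hd'; cbn [G].
      * replace (s + Z.of_nat 0) with s by lia. lia.
      * rewrite E1, Hpre by lia. f_equal. lia.
    + cbn [G]. rewrite E1, E2.
      replace (s + Z.of_nat (Datatypes.S d)) with (s + 1 + Z.of_nat d) by lia.
      split; [assumption|]. split; [assumption|].
      intros [|d'] Hd'; cbn [G].
      * lia.
      * rewrite E1, E2. apply Hother. lia.
Qed.

Variables (L R : Z) (fuel : nat).
Hypothesis Hcap1 : forall j, (1 <= cap j)%nat.
Hypothesis Hout : forall j, j < L \/ R < j -> c j = 0%nat.
Hypothesis Hfuel : (Z.to_nat (R - L) + 2 + csum L (Z.to_nat (R - L + 1)) <= fuel)%nat.

Definition St (k : Z) (M t : nat) : Z -> nat := fun j =>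
  if j <? L then c j else if j <? k then fin L j
  else if j =? k then (c k - t + Nat.min (free k) M)%nat
  else (c j + G (k + 1) (M - Nat.min (free k) M + t) (Z.to_nat (j - k - 1)))%nat.

Lemma free_pos_out j : R + 1 <= j -> (1 <= free j)%nat.
Proof. intros. unfold free. rewrite Hout by lia. specialize (Hcap1 j). lia. Qed.

Lemma move_St n t : (n < Z.to_nat (R - L + 1))%nat ->
  (t < c (L + Z.of_nat n))%nat ->
  gmove fuel (St (L + Z.of_nat n) (Mr L 0 n) t) (L + Z.of_nat n)
  = St (L + Z.of_nat n) (Mr L 0 n) (Datatypes.S t).
Proof.
  intros Hn Ht. set (k := L + Z.of_nat n). set (M := Mr L 0 n).
  set (M1 := (M - Nat.min (free k) M + t)%nat).
  assert (HM1 : (M1 + 1 <= csum L (Z.to_nat (R - L + 1)))%nat).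
  { pose proof (Mr_le L n). pose proof (csum_mono L (Datatypes.S n) (Z.to_nat (R - L + 1)) Hn).
    rewrite csum_S in H0. unfold M1, M. fold k in H0. fold k in Ht. lia. }
  destruct (G_succ (R + 1) free_pos_out _ (k + 1) M1 (le_n _))
    as (d & Hd & Hpre & Hlt & Hsucc & Hother).
  unfold gmove.
  assert (Hval : forall d', St k M t (k + 1 + Z.of_nat d') = (c (k + 1 + Z.of_nat d') + G (k + 1) M1 d')%nat).
  { intros d'. unfold St. destruct (Z.ltb_spec (k + 1 + Z.of_nat d') L); [unfold k in *; lia|].
    destruct (Z.ltb_spec (k + 1 + Z.of_nat d') k); [lia|].
    destruct (Z.eqb_spec (k + 1 + Z.of_nat d') k); [lia|].
    do 3 f_equal. lia. }
  rewrite (find_from_spec _ (k + 1) fuel d).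
  - apply functional_extensionality. intros j. unfold upd.
    destruct (Z.eqb_spec j (k + 1 + Z.of_nat d)) as [Ej|Ej].
    + subst j. destruct (Z.eqb_spec (k + 1 + Z.of_nat d) k); [lia|].
      rewrite Hval. unfold St.
      destruct (Z.ltb_spec (k + 1 + Z.of_nat d) L); [unfold k in *; lia|].
      destruct (Z.ltb_spec (k + 1 + Z.of_nat d) k); [lia|].
      destruct (Z.eqb_spec (k + 1 + Z.of_nat d) k); [lia|].
      replace (Z.to_nat (k + 1 + Z.of_nat d - k - 1)) with d by lia.
      replace (M - Nat.min (free k) M + Datatypes.S t)%nat with (Datatypes.S M1) by (unfold M1; lia).
      rewrite Hsucc. lia.
    + destruct (Z.eqb_spec j k) as [Ek|Ek].
      * subst j. unfold St. rewrite Z.eqb_refl.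
        destruct (Z.ltb_spec k L); [unfold k in *; lia|].
        destruct (Z.ltb_spec k k); [lia|]. fold k in Ht. lia.
      * unfold St.
        destruct (Z.ltb_spec j L); [reflexivity|].
        destruct (Z.ltb_spec j k); [reflexivity|].
        destruct (Z.eqb_spec j k); [lia|].
        replace (M - Nat.min (free k) M + Datatypes.S t)%nat with (Datatypes.S M1) by (unfold M1; lia).
        rewrite Hother by lia. reflexivity.
  - assert (Z.to_nat (R + 1 - (k + 1)) <= Z.to_nat (R - L))%nat by (unfold k; lia). lia.
  - intros d' Hd'. unfold upd. destruct (Z.eqb_spec (k + 1 + Z.of_nat d') k); [lia|].
    rewrite Hval, Hpre by lia. apply Nat.ltb_ge. unfold free. specialize (Hcap (k + 1 + Z.of_nat d')).
    replace (k + 1 + Z.of_nat d') with (k + 1 + Z.of_nat d') by lia. lia.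
  - unfold upd. destruct (Z.eqb_spec (k + 1 + Z.of_nat d) k); [lia|].
    rewrite Hval. apply Nat.ltb_lt. unfold free in Hlt.
    replace (k + 1 + Z.of_nat d) with (k + 1 + Z.of_nat d) in * by lia. lia.
Qed.


Lemma iter_St n t : (n < Z.to_nat (R - L + 1))%nat -> (t <= c (L + Z.of_nat n))%nat ->
  Nat.iter t (fun x => gmove fuel x (L + Z.of_nat n)) (St (L + Z.of_nat n) (Mr L 0 n) 0)
  = St (L + Z.of_nat n) (Mr L 0 n) t.
Proof.
  intros Hn. induction t; intros Ht; [reflexivity|].
  simpl. rewrite IHt by lia. apply move_St; lia.
Qed.

Lemma trans_St n : St (L + Z.of_nat n) (Mr L 0 n) (c (L + Z.of_nat n))
  = St (L + Z.of_nat (Datatypes.S n)) (Mr L 0 (Datatypes.S n)) 0.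
Proof.
  apply functional_extensionality; intros j. unfold St.
  set (k := L + Z.of_nat n).
  replace (L + Z.of_nat (Datatypes.S n)) with (k + 1) by (unfold k; lia).
  assert (HM : Mr L 0 (Datatypes.S n) = (Mr L 0 n - Nat.min (free k) (Mr L 0 n) + c k)%nat) by reflexivity.
  destruct (Z.ltb_spec j L); [reflexivity|].
  destruct (Z.ltb_spec j k).
  { destruct (Z.ltb_spec j (k + 1)); [reflexivity|lia]. }
  destruct (Z.eqb_spec j k).
  { subst j. destruct (Z.ltb_spec k (k + 1)); [|lia]. unfold fin.
    replace (Z.to_nat (k - L)) with n by (unfold k; lia). lia. }
  destruct (Z.ltb_spec j (k + 1)); [lia|].
  destruct (Z.eqb_spec j (k + 1)).
  { subst j. replace (Z.to_nat (k + 1 - k - 1)) with 0%nat by lia. cbn [G]. rewrite HM. lia. }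
  replace (Z.to_nat (j - k - 1)) with (Datatypes.S (Z.to_nat (j - (k + 1) - 1))) by lia.
  cbn [G]. rewrite HM. rewrite Nat.add_0_r. reflexivity.
Qed.

Lemma St_init : St L 0 0 = c.
Proof.
  apply functional_extensionality; intros j. unfold St.
  destruct (Z.ltb_spec j L); [reflexivity|].
  destruct (Z.ltb_spec j L); [lia|].
  destruct (Z.eqb_spec j L); [subst; lia|]. rewrite G_0. lia.
Qed.

Lemma fold_St n : (n <= Z.to_nat (R - L + 1))%nat ->
  fold_left (fun cnt j => Nat.iter (c j) (fun x => gmove fuel x j) cnt)
    (map (fun m => L + Z.of_nat m) (seq 0 n)) c = St (L + Z.of_nat n) (Mr L 0 n) 0.
Proof.
  induction n; intros Hn.
  - simpl. replace (L + 0) with L by lia. symmetry; apply St_init.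
  - rewrite seq_S, map_app, fold_left_app, IHn by lia. simpl.
    rewrite iter_St by lia. apply trans_St.
Qed.

Theorem gfold_spec : gfold fuel L R = fun j => if j <? L then c j else fin L j.
Proof.
  unfold gfold, sites. rewrite fold_St by lia.
  set (N := Z.to_nat (R - L + 1)).
  assert (HN : R < L + Z.of_nat N) by (unfold N; lia).
  apply functional_extensionality; intros j. unfold St.
  destruct (Z.ltb_spec j L); [reflexivity|].
  destruct (Z.ltb_spec j (L + Z.of_nat N)); [reflexivity|].
  destruct (Z.eqb_spec j (L + Z.of_nat N)).
  { subst j. unfold fin. rewrite Hout by lia. replace (Z.to_nat (L + Z.of_nat N - L)) with N by lia. lia. }
  rewrite G_c0 by (intros; apply Hout; lia). rewrite Hout by lia. simpl. unfold fin.
  replace (Z.to_nat (j - L)) with ((N + 1) + Z.to_nat (j - (L + Z.of_nat N) - 1))%nat by lia.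
  rewrite Mr_shift. simpl. rewrite Nat.add_1_r. cbn [Mr].
  rewrite (Hout (L + Z.of_nat N)) by lia. rewrite Nat.add_0_r.
  f_equal; [f_equal; lia|]. f_equal. lia.
Qed.
End Gen.

Lemma reanchor c cap L a j : (forall j, j < L -> c j = 0%nat) -> (forall j, j < a -> c j = 0%nat) ->
  a <= j -> (if j <? L then c j else fin c cap L j) = fin c cap a j.
Proof.
  intros HL Ha Hj. unfold fin. destruct (Z.ltb_spec j L).
  - rewrite HL by lia. rewrite Mr_zero; [lia|]. intros i Hi. apply HL. lia.
  - f_equal. destruct (Z_le_gt_dec a L).
    + replace (Z.to_nat (j - a)) with (Z.to_nat (L - a) + Z.to_nat (j - L))%nat by lia.
      rewrite Mr_shift. rewrite (Mr_zero c cap a (Z.to_nat (L - a))).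
      * f_equal. lia.
      * intros i Hi. apply HL. lia.
    + replace (Z.to_nat (j - L)) with (Z.to_nat (a - L) + Z.to_nat (j - a))%nat by lia.
      rewrite Mr_shift. rewrite (Mr_zero c cap L (Z.to_nat (a - L))).
      * f_equal. lia.
      * intros i Hi. apply Ha. lia.
Qed.

Definition cB (B : Z -> bool) (x : Z) : nat := if B x then 1%nat else 0%nat.

Lemma bbs_sim (B : Z -> bool) f : forall l cfg cnt, (forall y, (cnt y <= 1)%nat) ->
  cfg = (fun y => Nat.eqb (cnt y) 1) ->
  fold_left
    (fun cfg x =>
       if B x then
         let cfg1 := upd cfg x false in
         match find_from (fun y => negb (cfg1 y)) (x + 1) f with
         | Some y => upd cfg1 y true
         | None => cfg1
         end
       else cfg) l cfg
  = fun y => Nat.eqb (fold_left (fun cnt j => Nat.iter (cB B j) (fun z => gmove (fun _ => 1%nat) f z j) cnt) l cnt y) 1.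
Proof.
  induction l as [|x l IH]; intros cfg cnt Hle Hcfg; [simpl; exact Hcfg|].
  simpl. destruct (B x) eqn:Ex.
  - replace (cB B x) with 1%nat by (unfold cB; now rewrite Ex).
    simpl. unfold gmove. cbv zeta.
    set (cnt1 := upd cnt x (pred (cnt x))).
    assert (Hle1 : forall y, (cnt1 y <= 1)%nat).
    { intros y; unfold cnt1, upd. destruct (y =? x); [specialize (Hle x)|specialize (Hle y)]; lia. }
    assert (Hp : (fun y => negb (upd cfg x false y)) = (fun k => Nat.ltb (cnt1 k) 1)).
    { apply functional_extensionality; intros y. subst cfg. unfold cnt1, upd.
      destruct (y =? x); [specialize (Hle x)|specialize (Hle y)];
      destruct (cnt _) as [|[|]]; simpl; try reflexivity; lia. }
    assert (Hc1 : upd cfg x false = fun y => Nat.eqb (cnt1 y) 1).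
    { apply functional_extensionality; intros y. subst cfg. unfold cnt1, upd.
      destruct (y =? x); [specialize (Hle x)|reflexivity].
      destruct (cnt x) as [|[|]]; simpl; try reflexivity; lia. }
    rewrite Hp. destruct (find_from (fun k => Nat.ltb (cnt1 k) 1) (x + 1) f) as [y|] eqn:Ef.
    + apply find_from_some in Ef. cbv beta in Ef. apply Nat.ltb_lt in Ef.
      apply IH.
      * intros z; unfold upd. destruct (z =? y); [lia|apply Hle1].
      * rewrite Hc1. apply functional_extensionality; intros z. unfold upd.
        destruct (z =? y); [|reflexivity]. replace (cnt1 y) with 0%nat by lia. reflexivity.
    + apply IH; assumption.
  - replace (cB B x) with 0%nat by (unfold cB; now rewrite Ex).
    simpl. apply IH; assumption.
Qed.

Lemma TBBS_w_eq L R B :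
  TBBS_w L R B = fun y => Nat.eqb (gfold (cB B) (fun _ => 1%nat)
     (Z.to_nat (R - L) + 2 + length (filter B (sites L R)))%nat L R y) 1.
Proof.
  unfold TBBS_w, gfold. cbv zeta. apply bbs_sim.
  - intros y; unfold cB; destruct (B y); lia.
  - apply functional_extensionality; intros y; unfold cB; destruct (B y); reflexivity.
Qed.

Fixpoint Psum (f : Z -> nat) (i : Z) (m : nat) : nat :=
  match m with O => O | Datatypes.S m' => (f i + 1 + Psum f (i + 1)%Z m')%nat end.

Lemma Psum_S f i m : Psum f i (Datatypes.S m) = (Psum f i m + f (i + Z.of_nat m)%Z + 1)%nat.
Proof.
  revert i; induction m; intros i.
  - simpl. replace (i + 0) with i by lia. lia.
  - change (Psum f i (Datatypes.S (Datatypes.S m))) with (f i + 1 + Psum f (i + 1) (Datatypes.S m))%nat.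
    rewrite IHm. simpl. replace (i + 1 + Z.of_nat m) with (i + Z.pos (Pos.of_succ_nat m)) by lia. lia.
Qed.

Lemma Psum_ge f i m : (m <= Psum f i m)%nat.
Proof. revert i; induction m; intros i; simpl; [lia|]. specialize (IHm (i+1)). lia. Qed.

Lemma Psum_mono f i m m' : (m <= m')%nat -> (Psum f i m <= Psum f i m')%nat.
Proof. induction 1; [lia|]. rewrite Psum_S. lia. Qed.

Lemma unb_r_block (T : Z -> site) : forall m i f o, (m < f)%nat ->
  (o <= sb (T (i + Z.of_nat m)%Z))%nat ->
  unb_r f T i (Psum (fun k => sb (T k)) i m + o) = Nat.ltb o (sc (T (i + Z.of_nat m)%Z)).
Proof.
  induction m; intros i f o Hf Ho; (destruct f as [|f]; [lia|]).
  - simpl in *. rewrite Z.add_0_r in *.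
    destruct (Nat.ltb_spec o (sb (T i) + 1)); [reflexivity|lia].
  - cbn [unb_r Psum].
    destruct (Nat.ltb_spec (sb (T i) + 1 + Psum (fun k => sb (T k)) (i + 1) m + o) (sb (T i) + 1)); [lia|].
    replace (sb (T i) + 1 + Psum (fun k => sb (T k)) (i + 1) m + o - (sb (T i) + 1))%nat
      with (Psum (fun k => sb (T k)) (i + 1) m + o)%nat by lia.
    replace (i + Z.of_nat (Datatypes.S m)) with (i + 1 + Z.of_nat m) in * by lia.
    apply IHm; lia.
Qed.

Lemma Unb_block (T : Z -> site) i0 m o : (o <= sb (T (i0 + Z.of_nat m)%Z))%nat ->
  Unb i0 T (Z.of_nat (Psum (fun k => sb (T k)) i0 m + o)) = Nat.ltb o (sc (T (i0 + Z.of_nat m)%Z)).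
Proof.
  intros Ho. unfold Unb. destruct (Z.leb_spec 0 (Z.of_nat (Psum (fun k => sb (T k)) i0 m + o))); [|lia].
  rewrite Nat2Z.id. apply unb_r_block; [|assumption].
  pose proof (Psum_ge (fun k => sb (T k)) i0 m). lia.
Qed.

Lemma unb_l_V (T : Z -> site) : forall f i n, (forall j, j <= i -> T j = V) -> unb_l f T i n = false.
Proof.
  induction f; intros i n H; [reflexivity|]. simpl. rewrite (H i) by lia. simpl.
  destruct (Nat.ltb_spec n 1); [reflexivity|]. apply IHf. intros; apply H; lia.
Qed.

Lemma Unb_neg (T : Z -> site) i0 x : (forall j, j < i0 -> T j = V) -> x < 0 -> Unb i0 T x = false.
Proof.
  intros H Hx. unfold Unb. destruct (Z.leb_spec 0 x); [lia|]. apply unb_l_V. intros; apply H; lia.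
Qed.

Lemma cover (g : Z -> nat) i : forall x : nat, exists m o, x = (Psum g i m + o)%nat /\ (o <= g (i + Z.of_nat m)%Z)%nat.
Proof.
  induction x as [|x IH].
  - exists 0%nat, 0%nat. simpl. lia.
  - destruct IH as (m & o & Hx & Ho).
    destruct (Nat.eq_dec o (g (i + Z.of_nat m)%Z)).
    + exists (Datatypes.S m), 0%nat. rewrite Psum_S. lia.
    + exists m, (Datatypes.S o). lia.
Qed.

Definition fF (e c M i : nat) : nat :=
  if Nat.leb i e then (M - i)%nat else if Nat.leb i (e + c) then (M - e + (i - e))%nat else (M - e + c - 1)%nat.

Lemma seg (cf : Z -> nat) s M e c r :
  (forall i, (i < e + c + r)%nat -> cf (s + Z.of_nat i) = if andb (Nat.leb e i) (Nat.ltb i (e + c)) then 1%nat else 0%nat) ->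
  (r <= 1)%nat -> (c = 0%nat <-> r = 1%nat) ->
  forall i, (i <= e + c + r)%nat -> Mr cf (fun _ => 1%nat) s M i = fF e c M i.
Proof.
  intros Hc Hr Hcr.
  assert (Hcr' : (c = 0%nat /\ r = 1%nat) \/ (1 <= c /\ r = 0)%nat).
  { destruct (Nat.eq_dec c 0); [left; split; [assumption|apply Hcr; assumption]|right].
    split; [lia|]. destruct (Nat.eq_dec r 1); [apply Hcr in e0; lia|lia]. }
  clear Hcr. induction i; intros Hi.
  - unfold fF. simpl. lia.
  - cbn [Mr]. rewrite IHi by lia. unfold free. rewrite Hc by lia. unfold fF.
    destruct (Nat.leb_spec i e); destruct (Nat.leb_spec (Datatypes.S i) e);
    destruct (Nat.leb_spec i (e + c)); destruct (Nat.leb_spec (Datatypes.S i) (e + c));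
    destruct (Nat.leb_spec e i); destruct (Nat.ltb_spec i (e + c)); cbn [andb]; lia.
Qed.

Lemma seg_fin (cf : Z -> nat) s M e c r :
  (forall i, (i < e + c + r)%nat -> cf (s + Z.of_nat i) = if andb (Nat.leb e i) (Nat.ltb i (e + c)) then 1%nat else 0%nat) ->
  (r <= 1)%nat -> (c = 0%nat <-> r = 1%nat) ->
  forall i, (i < e + c + r)%nat ->
  Nat.min (free cf (fun _ => 1%nat) (s + Z.of_nat i)) (fF e c M i) =
  if Nat.ltb i (Nat.min (e + r) M) then 1%nat else 0%nat.
Proof.
  intros Hc Hr Hcr i Hi.
  assert (Hcr' : (c = 0%nat /\ r = 1%nat) \/ (1 <= c /\ r = 0)%nat).
  { destruct (Nat.eq_dec c 0); [left; split; [assumption|apply Hcr; assumption]|right].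
    split; [lia|]. destruct (Nat.eq_dec r 1); [apply Hcr in e0; lia|lia]. }
  clear Hcr. unfold free. rewrite Hc by lia. unfold fF.
  destruct (Nat.leb_spec i e); destruct (Nat.leb_spec i (e + c));
  destruct (Nat.leb_spec e i); destruct (Nat.ltb_spec i (e + c));
  destruct (Nat.ltb_spec i (Nat.min (e + r) M)); cbn [andb]; lia.
Qed.

Section Main.
Variable (S : Z -> site) (i0 : Z).
Hypothesis HV : forall j, valid_site (S j).
Hypothesis Hbef : forall j, j <= i0 -> S j = V.

Let bb k := sb (S k).
Let cc k := sc (S k).
Let ee k := empty_baskets (S k).
Let b' k := baskets_after S k.
Let Bc := Unb i0 S.

Lemma site_facts k : (ee k <= bb k)%nat /\ (cc k + ee k <= bb k + 1)%nat /\
  (bb k + 1 - ee k - cc k <= 1)%nat /\ (cc k = 0%nat <-> (bb k + 1 - ee k - cc k = 1)%nat).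
Proof.
  pose proof (HV k). unfold valid_site in H. unfold bb, cc, ee, empty_baskets. lia.
Qed.

Lemma b'_eq k : b' k = (bb k - ee k + ee (k - 1))%nat.
Proof. reflexivity. Qed.

Lemma ee_before : ee (i0 - 1) = 0%nat.
Proof. unfold ee. rewrite Hbef by lia. reflexivity. Qed.

Lemma claim1 n : (Psum b' i0 n + ee (i0 + Z.of_nat n - 1) = Psum bb i0 n)%nat.
Proof.
  induction n.
  - simpl. replace (i0 + 0 - 1) with (i0 - 1) by lia. rewrite ee_before. lia.
  - rewrite !Psum_S. rewrite b'_eq.
    replace (i0 + Z.of_nat n - 1) with (i0 + Z.of_nat n - 1) in IHn by lia.
    replace (i0 + Z.of_nat (Datatypes.S n) - 1) with (i0 + Z.of_nat n) by lia.
    pose proof (site_facts (i0 + Z.of_nat n)). lia.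
Qed.

Lemma claim2 n o : (o <= b' (i0 + Z.of_nat n))%nat ->
  Bc (Z.of_nat (Psum b' i0 n + o)) =
  andb (Nat.leb (ee (i0 + Z.of_nat n - 1)) o) (Nat.ltb o (ee (i0 + Z.of_nat n - 1) + cc (i0 + Z.of_nat n))).
Proof.
  intros Ho. pose proof (claim1 n) as H1. set (k := i0 + Z.of_nat n) in *.
  rewrite b'_eq in Ho.
  destruct (Nat.ltb_spec o (ee (k - 1))) as [Hlt|Hge].
  - destruct n as [|n1].
    { unfold k in Hlt. replace (i0 + Z.of_nat 0 - 1) with (i0 - 1) in Hlt by lia. rewrite ee_before in Hlt. lia. }
    rewrite (Psum_S bb) in H1.
    replace (i0 + Z.of_nat n1) with (k - 1) in H1 by (unfold k; lia).
    pose proof (site_facts (k - 1)).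
    replace (Psum b' i0 (Datatypes.S n1) + o)%nat
      with (Psum bb i0 n1 + (bb (k - 1) + 1 - ee (k - 1) + o))%nat by lia.
    unfold Bc. rewrite (Unb_block S i0 n1).
    + replace (i0 + Z.of_nat n1) with (k - 1) by (unfold k; lia).
      replace (Nat.leb (ee (k - 1)) o) with false by (symmetry; apply Nat.leb_gt; lia).
      simpl. apply Nat.ltb_ge. fold (cc (k - 1)). lia.
    + replace (i0 + Z.of_nat n1) with (k - 1) by (unfold k; lia). fold (bb (k-1)). lia.
  - pose proof (site_facts k).
    replace (Psum b' i0 n + o)%nat with (Psum bb i0 n + (o - ee (k - 1)))%nat by lia.
    unfold Bc. rewrite (Unb_block S i0 n).
    + fold k. fold (cc k). simpl.
      replace (Nat.leb (ee (k-1)) o) with true by (symmetry; apply Nat.leb_le; lia). simpl.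
      destruct (Nat.ltb_spec (o - ee (k - 1)) (cc k)); destruct (Nat.ltb_spec o (ee (k - 1) + cc k)); lia.
    + fold k. fold (bb k). lia.
Qed.

Let cBB := cB Bc.
Let cA := fun k => sc (S k).
Let capA := cap_after S.

Lemma claim2B n o : (o <= b' (i0 + Z.of_nat n))%nat ->
  cBB (0 + Z.of_nat (Psum b' i0 n) + Z.of_nat o) =
  if andb (Nat.leb (ee (i0 + Z.of_nat n - 1)) o) (Nat.ltb o (ee (i0 + Z.of_nat n - 1) + cc (i0 + Z.of_nat n)))
  then 1%nat else 0%nat.
Proof.
  intros Ho. unfold cBB, cB. replace (0 + Z.of_nat (Psum b' i0 n) + Z.of_nat o) with (Z.of_nat (Psum b' i0 n + o)) by lia.
  rewrite claim2 by assumption. reflexivity.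
Qed.

Lemma step3 n : Mr cBB (fun _ => 1%nat) 0 0 (Psum b' i0 n) = Mr cA capA i0 0 n ->
  (forall o, (o <= b' (i0 + Z.of_nat n))%nat ->
    Nat.min (free cBB (fun _ => 1%nat) (Z.of_nat (Psum b' i0 n + o)))
            (Mr cBB (fun _ => 1%nat) 0 0 (Psum b' i0 n + o)) =
    if Nat.ltb o (Nat.min (free cA capA (i0 + Z.of_nat n)) (Mr cA capA i0 0 n)) then 1%nat else 0%nat) /\
  Mr cBB (fun _ => 1%nat) 0 0 (Psum b' i0 (Datatypes.S n)) = Mr cA capA i0 0 (Datatypes.S n).
Proof.
  intros HM.
  pose proof (site_facts (i0 + Z.of_nat n)) as (F1 & F2 & F3 & F4).
  set (k := i0 + Z.of_nat n) in *.
  set (e := ee (k - 1)). set (c := cc k). set (r := (bb k + 1 - ee k - cc k)%nat) in *.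
  set (M := Mr cA capA i0 0 n) in *.
  assert (Hb : (b' k + 1 = e + c + r)%nat) by (rewrite b'_eq; unfold e, c, r; lia).
  assert (Hr : (r <= 1)%nat) by lia.
  assert (Hcr : c = 0%nat <-> r = 1%nat) by (unfold c, r; exact F4).
  assert (Hseg : forall i, (i < e + c + r)%nat -> cBB (0 + Z.of_nat (Psum b' i0 n) + Z.of_nat i) =
      if andb (Nat.leb e i) (Nat.ltb i (e + c)) then 1%nat else 0%nat).
  { intros i Hi. apply claim2B. fold k. lia. }
  assert (HMr : forall i, (i <= e + c + r)%nat ->
     Mr cBB (fun _ => 1%nat) 0 0 (Psum b' i0 n + i) = fF e c M i).
  { intros i Hi. rewrite Mr_shift, HM. apply (seg _ _ _ _ _ r); assumption. }
  assert (HfA : free cA capA k = (e + r)%nat).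
  { unfold free, cA, capA, cap_after. fold (b' k). fold (cc k). fold c. lia. }
  split.
  - intros o Ho. rewrite HMr by lia. rewrite HfA.
    replace (Z.of_nat (Psum b' i0 n + o)) with (0 + Z.of_nat (Psum b' i0 n) + Z.of_nat o) by lia.
    apply (seg_fin _ _ _ _ _ r); try assumption. lia.
  - rewrite Psum_S. fold k. replace (Psum b' i0 n + b' k + 1)%nat with (Psum b' i0 n + (e + c + r))%nat by lia.
    rewrite HMr by lia. cbn [Mr]. fold k. fold M. rewrite HfA.
    replace (cA k) with c by reflexivity. unfold fF.
    assert (Hcr' : (c = 0%nat /\ r = 1%nat) \/ (1 <= c /\ r = 0)%nat).
    { destruct (Nat.eq_dec c 0); [left; split; [assumption|apply Hcr; assumption]|right].
      split; [lia|]. destruct (Nat.eq_dec r 1) as [Er|Er]; [apply Hcr in Er; lia|lia]. }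
    destruct (Nat.leb_spec (e + c + r) e); destruct (Nat.leb_spec (e + c + r) (e + c)); lia.
Qed.

Lemma claim3 n : Mr cBB (fun _ => 1%nat) 0 0 (Psum b' i0 n) = Mr cA capA i0 0 n.
Proof.
  induction n as [|n IH]; [reflexivity|]. apply (step3 n IH).
Qed.
End Main.

Lemma fr_csum c L : forall N s,
  fold_right (fun j acc => (c j + acc)%nat) 0%nat (map (fun n => L + Z.of_nat n) (seq s N))
  = csum c (L + Z.of_nat s) N.
Proof.
  induction N; intros s; [reflexivity|]. simpl. rewrite IHN. do 2 f_equal. lia.
Qed.

Lemma len_filter (B : Z -> bool) l : length (filter B l) = fold_right (fun j acc => (cB B j + acc)%nat) 0%nat l.
Proof. induction l; simpl; [reflexivity|]. unfold cB at 1. destruct (B a); simpl; lia. Qed.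

Theorem mainTheorem4 (S : Z -> site) (HS : is_state S) (i0 : Z)
  (Hi0 : forall i, i <= i0 -> S i = V /\ Tinf S i = V) :
  forall x : Z, Unb i0 (Tinf S) x = TBBS (Unb i0 S) x.
Proof.
  destruct HS as [HV [N HN]].
  assert (Hbef : forall j, j <= i0 -> S j = V) by (intros; apply Hi0; assumption).
  assert (HW : forall i, i < fst (bbbs_window S) \/ snd (bbbs_window S) < i -> S i = V).
  { unfold bbbs_window. apply epsilon_spec. exists (-N, N). simpl. intros i Hi. apply HN. lia. }
  set (L := fst (bbbs_window S)) in HW. set (R := snd (bbbs_window S)) in HW.
  set (cA := fun j => sc (S j)). set (capA := cap_after S).
  assert (HcapA : forall j, (cA j <= capA j)%nat).
  { intros j. pose proof (HV j) as Hv. pose proof (HV (j - 1)) as Hv'.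
    unfold valid_site in *. unfold cA, capA, cap_after, baskets_after, empty_baskets. lia. }
  assert (HoutA : forall j, j < L \/ R < j -> cA j = 0%nat) by (intros j Hj; unfold cA; rewrite HW by exact Hj; reflexivity).
  assert (HscT : forall k, i0 <= k -> sc (Tinf S k) = fin cA capA i0 k).
  { intros k Hk.
    change (sc (Tinf S k)) with (gfold cA capA
       (Z.to_nat (R - L) + 2 + fold_right (fun j acc => (sc (S j) + acc)%nat) 0%nat (sites L R))%nat L R k).
    rewrite (gfold_spec cA capA HcapA L R).
    - apply reanchor; [| |exact Hk].
      + intros j Hj. apply HoutA. left; exact Hj.
      + intros j Hj. unfold cA. rewrite Hbef by lia. reflexivity.
    - intros; unfold capA, cap_after; lia.
    - exact HoutA.
    - unfold sites. rewrite (fr_csum (fun j => sc (S j))). simpl. replace (L + 0) with L by lia. unfold cA. lia. }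
  assert (HsbT : (fun k => sb (Tinf S k)) = (fun k => baskets_after S k)) by reflexivity.
  set (Bc := Unb i0 S).
  assert (HBneg : forall x, x < 0 -> Bc x = false).
  { intros x Hx. apply Unb_neg; [intros; apply Hbef; lia|assumption]. }
  assert (HWB : forall x, Bc x = true -> fst (bbs_window Bc) <= x <= snd (bbs_window Bc)).
  { unfold bbs_window. apply epsilon_spec.
    exists (0, Z.of_nat (Psum (fun k => sb (S k)) i0 (Z.to_nat (N + 1 - i0)))). simpl.
    intros x Hx. destruct (Z_lt_le_dec x 0) as [Hneg|Hpos]; [rewrite HBneg in Hx by lia; discriminate|].
    destruct (cover (fun k => sb (S k)) i0 (Z.to_nat x)) as (m & o & Hxm & Ho).
    replace x with (Z.of_nat (Psum (fun k => sb (S k)) i0 m + o)) in Hx by lia.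
    unfold Bc in Hx. rewrite Unb_block in Hx by assumption.
    apply Nat.ltb_lt in Hx.
    assert (Hm : Z.abs (i0 + Z.of_nat m) <= N).
    { destruct (Z_le_gt_dec (Z.abs (i0 + Z.of_nat m)) N); [assumption|].
      rewrite HN in Hx by lia. simpl in Hx. lia. }
    assert (Hm2 : (Datatypes.S m <= Z.to_nat (N + 1 - i0))%nat) by lia.
    pose proof (Psum_mono (fun k => sb (S k)) i0 _ _ Hm2). rewrite Psum_S in H. lia. }
  set (Lb := fst (bbs_window Bc)) in HWB. set (Rb := snd (bbs_window Bc)) in HWB.
  assert (HoutB : forall j, j < Lb \/ Rb < j -> cB Bc j = 0%nat).
  { intros j Hj. unfold cB. destruct (Bc j) eqn:E; [|reflexivity]. apply HWB in E. lia. }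
  assert (HT : forall x, TBBS Bc x = Nat.eqb (if x <? Lb then cB Bc x else fin (cB Bc) (fun _ => 1%nat) Lb x) 1).
  { intros x. unfold TBBS. fold Lb Rb. rewrite TBBS_w_eq. rewrite gfold_spec.
    - reflexivity.
    - intros j; unfold cB; destruct (Bc j); lia.
    - intros; lia.
    - exact HoutB.
    - unfold sites. rewrite len_filter, fr_csum. simpl. replace (Lb + 0) with Lb by lia. lia. }
  assert (HcBneg : forall j, j < 0 -> cB Bc j = 0%nat).
  { intros j Hj. unfold cB. rewrite HBneg by assumption. reflexivity. }
  assert (HcBL : forall j, j < Lb -> cB Bc j = 0%nat) by (intros; apply HoutB; lia).
  intros x. fold Bc. rewrite HT.
  destruct (Z_lt_le_dec x 0) as [Hneg|Hpos].
  - rewrite Unb_neg by (try assumption; intros j Hj; apply Hi0; lia).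
    rewrite (reanchor _ _ Lb x x HcBL); [| intros j Hj; apply HcBneg; lia | lia].
    unfold fin. replace (Z.to_nat (x - x)) with 0%nat by lia. simpl. rewrite Nat.min_0_r. reflexivity.
  - rewrite (reanchor _ _ Lb 0 x HcBL HcBneg Hpos).
    destruct (cover (fun k => baskets_after S k) i0 (Z.to_nat x)) as (m & o & Hxm & Ho).
    replace x with (Z.of_nat (Psum (fun k => baskets_after S k) i0 m + o)) by lia.
    pose proof (Unb_block (Tinf S) i0 m o Ho) as HU.
    change (Psum (fun k => sb (Tinf S k)) i0 m) with (Psum (fun k => baskets_after S k) i0 m) in HU.
    rewrite HU.
    rewrite HscT by lia.
    assert (HM := claim3 S i0 HV Hbef m).
    destruct (step3 S i0 HV Hbef m HM) as [Hfin _].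
    unfold fin. replace (Z.to_nat (Z.of_nat (Psum (fun k => baskets_after S k) i0 m + o) - 0))
      with (Psum (fun k => baskets_after S k) i0 m + o)%nat by lia.
    fold Bc in Hfin. rewrite (Hfin o Ho).
    replace (Z.to_nat (i0 + Z.of_nat m - i0)) with m by lia.
    fold cA capA. clear HU.
    destruct (Nat.ltb o (Nat.min (free cA capA (i0 + Z.of_nat m)) (Mr cA capA i0 0 m))); reflexivity.
Qed.
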